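(* Let $G$ be a Borel groupoid acting freely on the right of a Borel space $X$ such that the quotient map $q:X\to X/G$ has a Borel cross section. Then $X$ is a proper Borel $G$-space.
   Context: All Borel spaces are analytic. A right Borel $G$-space $X$ has a Borel moment map $s_X:X\to G^{(0)}$ and a Borel action $x\cdot\gamma$ defined when $s_X(x)=r(\gamma)$; it is free if $x\cdot\gamma=x$ implies $\gamma$ is a unit. $X/G$ carries the quotient Borel structure. $X$ is a proper right Borel $G$-space if the transformation groupoid $X\rtimes G=\{(x,\gamma):s_X(x)=r(\gamma)\}$ (with $(x,\gamma)(x\cdot\gamma,\eta)=(x,\gamma\eta)$ and unit space $X$) is a proper Borel groupoid, i.e. there is a family $\{m^x\}_{x\in X}$ of probability measures on $X\rtimes G$, $m^x$ supported on the range fibre over $x$, with $x\mapsto\int f\,dm^x$ Borel for nonnegative Borel $f$ and $g\cdot m^{s(g)}=m^{r(g)}$ for all $g\in X\rtimes G$. *)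

(* Defs.v *)
From HB Require Import structures.
From mathcomp Require Import all_boot all_order all_algebra.
From mathcomp Require Import all_classical all_reals all_analysis.
From mathcomp Require Import measurable_realfun.

Set Implicit Arguments.
Unset Strict Implicit.
Unset Printing Implicit Defensive.

Import Order.TTheory GRing.Theory Num.Theory.
Local Open Scope classical_set_scope.
Local Open Scope ring_scope.

Definition polish_space (R : realType) (P : completePseudoMetricType R) : Prop :=
  hausdorff_space P /\ exists D : set P, countable D /\ dense D.

Definition analytic_subset (R : realType) (P : completePseudoMetricType R)
    (A : set P) : Prop :=
  A = set0 \/
  exists (Q : completePseudoMetricType R) (f : Q -> P),
    polish_space Q /\ continuous f /\ range f = A.

(* A Borel space is analytic if it is isomorphic (as a Borel space) to an
   analytic subset of a Polish space with the relative Borel structure. *)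
Definition analytic_borel_space d (T : measurableType d) : Prop :=
  exists (R : realType) (P : completePseudoMetricType R) (e : T -> P),
    [/\ polish_space P, injective e, analytic_subset (range e) &
        forall A : set T, measurable A <->
          exists B : set P, <<s open >> B /\ A = e @^-1` B].

Section Groupoid.
Context d (G : measurableType d) (r s : G -> G) (mul : G -> G -> G)
  (inv : G -> G).

Definition units : set G := [set u | r u = u].
Definition composable : set (G * G) := [set p | s p.1 = r p.2].

Definition is_groupoid : Prop :=
  [/\ (forall g, r (r g) = r g /\ s (r g) = r g /\ r (s g) = s g /\ s (s g) = s g),
      (forall g h, s g = r h -> r (mul g h) = r g /\ s (mul g h) = s h),
      (forall g h k, s g = r h -> s h = r k ->
          mul (mul g h) k = mul g (mul h k)),
      (forall g, mul (r g) g = g /\ mul g (s g) = g) &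
      (forall g, r (inv g) = s g /\ s (inv g) = r g /\
                 mul g (inv g) = r g /\ mul (inv g) g = s g)].

Definition is_borel_groupoid : Prop :=
  is_groupoid /\
  measurable_fun setT r /\ measurable_fun setT s /\ measurable_fun setT inv /\
  measurable units /\ measurable composable /\
  measurable_fun composable (fun p => mul p.1 p.2).

End Groupoid.

Section GSpace.
Context d (G : measurableType d) (r s : G -> G) (mul : G -> G -> G)
  (dX : measure_display) (X : measurableType dX)
  (sX : X -> G) (act : X -> G -> X).

(* the composable pairs of the action, = underlying set of X ⋊ G *)
Definition action_dom : set (X * G) := [set p | sX p.1 = r p.2].

Definition is_right_borel_action : Prop :=
  (forall x, units r (sX x)) /\
  (forall x g, sX x = r g -> sX (act x g) = s g) /\
  (forall x, act x (sX x) = x) /\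
  (forall x g h, sX x = r g -> s g = r h ->
      act (act x g) h = act x (mul g h)) /\
  measurable_fun setT sX /\ measurable action_dom /\
  measurable_fun action_dom (fun p => act p.1 p.2).

Definition free_action : Prop :=
  forall x g, sX x = r g -> act x g = x -> units r g.

Definition orbit (x : X) : set X := [set y | exists g, sX x = r g /\ y = act x g].

Definition orbit_space : Type := {A : set X | exists x, A = orbit x}.

Definition qmap (x : X) : orbit_space :=
  exist (fun A => exists x, A = orbit x) (orbit x) (ex_intro _ x erefl).

Definition quotient_measurable (S : set orbit_space) : Prop :=
  measurable (qmap @^-1` S).

Definition borel_cross_section (c : orbit_space -> X) : Prop :=
  (forall a, qmap (c a) = a) /\
  (forall B : set X, measurable B -> quotient_measurable (c @^-1` B)).

(* In X ⋊ G: r(x,g) = x, s(x,g) = x·g, (x,g)(x·g,h) = (x,gh). *)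

Definition range_fibre (x : X) : set (X * G) :=
  [set p | p.1 = x /\ sX x = r p.2].

(* for the arrow (x,g) of X ⋊ G, the set of arrows h in the range fibre over
   s(x,g) = x·g such that (x,g) h lies in A; (x,g)·m is the measure
   A |-> m (transl_pre x g A) *)
Definition transl_pre (x : X) (g : G) (A : set (X * G)) : set (X * G) :=
  [set p | range_fibre (act x g) p /\ A (x, mul g p.2)].

Definition proper_borel_G_space (R : realType) : Prop :=
  exists m : X -> probability (X * G)%type R,
    [/\ (forall x, m x (range_fibre x) = 1%E),
        (forall f : X * G -> \bar R, (forall p, (0 <= f p)%E) ->
           measurable_fun [set: (X * G)%type] f ->
           measurable_fun setT (fun x => (\int[m x]_p f p)%E)) &
        (forall x g, sX x = r g -> forall A, measurable A ->
           m (act x g) (transl_pre x g A) = m x A)].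

End GSpace.

Arguments borel_cross_section [d G] r [dX X] sX act c.

(* Main.v *)
Require Import Defs.
From HB Require Import structures.
From mathcomp Require Import all_boot all_order all_algebra.
From mathcomp Require Import all_classical all_reals all_analysis.
From mathcomp Require Import measurable_realfun.
From mathcomp Require Import zify.
Require Import Defs.
Set Implicit Arguments.
Unset Strict Implicit.
Unset Printing Implicit Defensive.
Import Order.TTheory GRing.Theory Num.Theory.
Local Open Scope classical_set_scope.
Local Open Scope ring_scope.

Section Souslin.
Context {T : topologicalType}.

Definition prefix_inv (F : nat -> (nat -> nat) -> set T) :=
  forall n s t, (forall j, (j < n)%N -> s j = t j) -> F n s = F n t.

Definition good_scheme (F : nat -> (nat -> nat) -> set T) :=
  forall s, (forall n, F n s !=set0) -> exists a, (forall n, F n s a) /\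
    (forall U, nbhs a U -> exists N, forall n, (N <= n)%N -> F n s `<=` U).

Definition branch (F : nat -> (nat -> nat) -> set T) :=
  [set x | exists s, forall n, F n s x].

Definition souslin (A : set T) :=
  exists F, [/\ prefix_inv F, good_scheme F & A = branch F].

Lemma good_conv F s x : hausdorff_space T -> good_scheme F ->
  (forall n, F n s x) ->
  forall U, nbhs x U -> exists N, forall n, (N <= n)%N -> F n s `<=` U.
Proof.
move=> hT gF Fx.
have [|a [Fa conv]] := gF s; first by move=> n; exists x.
suff -> : x = a by [].
apply: hT => A B nA nB.
have [N HN] := conv _ nB.
exists x; split; first exact: nbhs_singleton.
exact: (HN N (leqnn N)).
Qed.

End Souslin.

Lemma bound_nat (f : nat -> nat) n : exists M, forall j, (j < n)%N -> (f j < M)%N.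
Proof.
elim: n => [|n [M HM]]; first by exists 0%N.
exists (maxn M (f n).+1) => j; rewrite ltnS leq_eqVlt => /orP[/eqP->|/HM jM].
  by rewrite leq_max leqnn orbT.
by rewrite leq_max jM.
Qed.

Section Souslin2.
Context {T : topologicalType}.

Lemma souslin0 : souslin (set0 : set T).
Proof.
exists (fun _ _ => set0); split => //.
- by move=> s /(_ 0%N) [].
- by apply/seteqP; split => x // [s /(_ 0%N)].
Qed.

Lemma souslin_bigcup (A : nat -> set T) : (forall k, souslin (A k)) ->
  souslin (\bigcup_k A k).
Proof.
move=> hA; have [Fs HF] := choice hA.
pose F n (s : nat -> nat) : set T :=
  if n is m.+1 then Fs (s 0%N) m (fun j => s j.+1) else setT.
exists F; split.
- move=> [|m] s t //= st; rewrite (st 0%N) //.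
  have [pF _ _] := HF (t 0%N); apply: pF => j jm; exact: st.
- move=> s ne.
  have [_ gF _] := HF (s 0%N).
  have [|a [Fa conv]] := gF (fun j => s j.+1); first by move=> n; exact: (ne n.+1).
  exists a; split; first by case.
  move=> U /conv [N HN]; exists N.+1 => -[//|n] /= Nn; exact: HN.
- apply/seteqP; split => x.
  + move=> [k _]; have [_ _ ->] := HF k; move=> [s Hs].
    exists (fun j => if j is j'.+1 then s j' else k) => -[//|n] /=; exact: Hs.
  + move=> [s Hs]; exists (s 0%N) => //.
    have [_ _ ->] := HF (s 0%N); exists (fun j => s j.+1) => n; exact: (Hs n.+1).
Qed.

Lemma souslin_bigcap (A : nat -> set T) : hausdorff_space T ->
  (forall k, souslin (A k)) -> souslin (\bigcap_k A k).
Proof.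
move=> hT hA; have [Fs HF] := choice hA.
pose pk (k j : nat) : nat := pickle (k, j).
pose F m (s : nat -> nat) : set T := [set x | forall k n,
   (forall j, (j < n)%N -> (pk k j < m)%N) -> Fs k n (fun j => s (pk k j)) x].
have bnd k n : exists M, forall m, (M <= m)%N -> forall j, (j < n)%N -> (pk k j < m)%N.
  have [M HM] := bound_nat (pk k) n.
  by exists M => m Mm j jn; apply: leq_trans (HM _ jn) Mm.
exists F; split.
- move=> m s t st; apply/seteqP; split => x Hx k n Hkn.
  + have [pF _ _] := HF k; rewrite -(pF n (fun j => s (pk k j))); first exact: Hx.
    by move=> j jn; apply: st; apply: Hkn.
  + have [pF _ _] := HF k; rewrite (pF n _ (fun j => t (pk k j))); first exact: Hx.
    by move=> j jn; apply: st; apply: Hkn.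
- move=> s ne.
  have nek k n : Fs k n (fun j => s (pk k j)) !=set0.
    have [M HM] := bnd k n; have [x Fx] := ne M; exists x; apply: Fx; exact: HM.
  have Ha k : exists a, (forall n, Fs k n (fun j => s (pk k j)) a) /\
    (forall U, nbhs a U -> exists N, forall n, (N <= n)%N -> Fs k n (fun j => s (pk k j)) `<=` U).
    by have [_ gF _] := HF k; exact: gF.
  have [af Haf] := choice Ha.
  have eqa k : af k = af 0%N.
    apply: hT => U V nU nV.
    have [N1 H1] := (Haf 0%N).2 _ nV.
    have [N2 H2] := (Haf k).2 _ nU.
    have [M1 HM1] := bnd 0%N N1; have [M2 HM2] := bnd k N2.
    have [x Fx] := ne (maxn M1 M2).
    exists x; split.
    + apply: (H2 N2 (leqnn _)); apply: Fx => j jn; apply: HM2 => //; exact: leq_maxr.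
    + apply: (H1 N1 (leqnn _)); apply: Fx => j jn; apply: HM1 => //; exact: leq_maxl.
  exists (af 0%N); split.
  + move=> m k n _; rewrite -(eqa k); exact: (Haf k).1.
  + move=> U /(Haf 0%N).2 [N HN]; have [M HM] := bnd 0%N N.
    exists M => m Mm x Fx; apply: (HN N (leqnn _)); apply: Fx; exact: HM.
- apply/seteqP; split => x.
  + move=> Hx; have Hk k : exists s, forall n, Fs k n s x.
      by have [_ _ E] := HF k; have := Hx k I; rewrite E.
    have [sf Hsf] := choice Hk.
    pose t i := if @unpickle (prod nat nat) i is Some (k, j) then sf k j else 0%N.
    exists t => m k n _.
    have -> : (fun j => t (pk k j)) = sf k by apply/funext => j; rewrite /t /pk pickleK.
    exact: Hsf.
  + move=> [s Hs] k _; have [_ _ ->] := HF k.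
    exists (fun j => s (pk k j)) => n; have [M HM] := bnd k n.
    apply: (Hs M); exact: HM.
Qed.

End Souslin2.

Lemma souslin_image (T1 T2 : topologicalType) (f : T1 -> T2) (A : set T1) :
  continuous f -> hausdorff_space T2 -> souslin A -> souslin (f @` A).
Proof.
move=> cf hT [F [pF gF ->]].
exists (fun n s => f @` F n s); split.
- by move=> n s t st; rewrite (pF n s t st).
- move=> s ne; have [|a [Fa conv]] := gF s.
    by move=> n; have [_ [x Fx _]] := ne n; exists x.
  exists (f a); split; first by move=> n; exists a.
  move=> U nU; have [N HN] := conv _ (cf a U nU).
  by exists N => n Nn _ [x Fx <-]; exact: (HN n Nn x Fx).
- apply/seteqP; split => y.
  + by move=> [x [s Hs] <-]; exists s => n; exists x.
  + move=> [s Hs]; have [|a [Fa conv]] := gF s.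
      by move=> n; have [x Fx _] := Hs n; exists x.
    suff -> : y = f a by exists a => //; exists s.
    apply: hT => U V nU nV.
    have [N HN] := conv _ (cf a V nV).
    have [x Fx xy] := Hs N.
    exists y; split; first exact: nbhs_singleton.
    by rewrite -xy; exact: (HN N (leqnn _) x Fx).
Qed.

Lemma souslin_setX (T1 T2 : topologicalType) (A : set T1) (B : set T2) :
  souslin A -> souslin B -> souslin (A `*` B).
Proof.
move=> [F1 [pF1 gF1 ->]] [F2 [pF2 gF2 ->]].
exists (fun n s => F1 n./2 (fun j => s j.*2) `*` F2 n./2 (fun j => s j.*2.+1)).
split.
- move=> n s t st; rewrite (pF1 n./2 _ (fun j => t j.*2)); last first.
    by move=> j jn; apply: st; lia.
  by rewrite (pF2 n./2 _ (fun j => t j.*2.+1)) // => j jn; apply: st; lia.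
- move=> s ne.
  have [|a1 [Fa1 c1]] := gF1 (fun j => s j.*2).
    by move=> n; have [[x y] [/= Fx _]] := ne n.*2; exists x; rewrite doubleK in Fx.
  have [|a2 [Fa2 c2]] := gF2 (fun j => s j.*2.+1).
    by move=> n; have [[x y] [/= _ Fy]] := ne n.*2; exists y; rewrite doubleK in Fy.
  exists (a1, a2); split; first by move=> n; split.
  move=> W [[P Q] [/= nP nQ] PQW].
  have [N1 H1] := c1 _ nP; have [N2 H2] := c2 _ nQ.
  exists (maxn N1 N2).*2 => n Nn [x y] [/= Fx Fy]; apply: PQW; split => /=.
  + by apply: (H1 n./2) => //; lia.
  + by apply: (H2 n./2) => //; lia.
- apply/seteqP; split => -[x y].
  + move=> [/= [s Hs] [t Ht]].
    exists (fun j => if odd j then t j./2 else s j./2) => n; split => /=.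
    * have -> : (fun j => if odd j.*2 then t j.*2./2 else s j.*2./2) = s.
        by apply/funext => j; rewrite odd_double doubleK.
      exact: Hs.
    * have -> : (fun j => if odd j.*2.+1 then t j.*2.+1./2 else s j.*2.+1./2) = t.
        by apply/funext => j; rewrite /= odd_double /= uphalf_double.
      exact: Ht.
  + move=> [s Hs]; split.
    * by exists (fun j => s j.*2) => n; have [] := Hs n.*2; rewrite doubleK.
    * by exists (fun j => s j.*2.+1) => n; have [] := Hs n.*2; rewrite doubleK.
Qed.

Record kstruct (T : topologicalType) (K : nat -> nat -> set T) : Prop := {
 k0 : forall n x, exists j, K n j x;
 k1 : forall b, (forall n, exists x, forall m, (m <= n)%N -> K m (b m) x) ->
        exists a, forall n, K n (b n) a;
 k2 : forall b a, (forall n, K n (b n) a) -> forall U, nbhs a U ->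
        exists N, K N (b N) `<=` U;
 k3 : forall n j, closed (K n j) }.

Section KS.
Context (T : topologicalType) (K : nat -> nat -> set T) (hK : kstruct K).

Lemma souslin_closed (C : set T) : closed C -> souslin C.
Proof.
move=> cC.
exists (fun n b => C `&` [set x | forall m, (m < n)%N -> K m (b m) x]); split.
- move=> n s t st; apply/seteqP; split => x [Cx Hx]; split => // m mn.
  + by rewrite -st //; exact: Hx.
  + by rewrite st //; exact: Hx.
- move=> b ne.
  have [|a Ha] := @k1 _ _ hK b.
    by move=> n; have [x [_ Hx]] := ne n.+1; exists x => m mn; apply: Hx.
  have Ca : C a.
    apply/not_notP => nCa.
    have oC : open (~` C) by exact: closed_openC.
    have [N HN] := k2 hK Ha (open_nbhs_nbhs (conj oC nCa)).
    by have [x [Cx Hx]] := ne N.+1; exact: (HN x (Hx N (ltnSn _))).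
  exists a; split; first by move=> n; split.
  move=> U /(k2 hK Ha) [N HN]; exists N.+1 => n Nn x [_ Hx]; apply: HN; exact: Hx.
- apply/seteqP; split => x.
  + move=> Cx; have [b Hb] := choice (fun n => k0 hK n x).
    by exists b => n; split.
  + by move=> [b /(_ 0%N) []].
Qed.

Lemma souslin_open (U : set T) : open U -> souslin U.
Proof.
move=> oU.
have -> : U = \bigcup_n \bigcup_j
    (if pselect (K n j `<=` U) then K n j else set0).
  apply/seteqP; split => x.
  + move=> Ux; have [b Hb] := choice (fun n => k0 hK n x).
    have [N HN] := k2 hK Hb (open_nbhs_nbhs (conj oU Ux)).
    exists N => //; exists (b N) => //; case: pselect => [_ /=|//]; exact: Hb.
  + by move=> [n _ [j _]]; case: pselect => [KU /KU //|_ []].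
apply: souslin_bigcup => n; apply: souslin_bigcup => j.
case: pselect => [KU|nKU] /=; first exact/souslin_closed/(k3 hK).
exact: souslin0.
Qed.

End KS.

Section SG.
Context {T : Type} (G : set (set T)).
Lemma sgC A : <<s G >> A -> <<s G >> (~` A).
Proof. by move=> h; rewrite -setTD; exact: sigma_algebraCD. Qed.
Lemma sgU (A : nat -> set T) : (forall k, <<s G >> (A k)) -> <<s G >> (\bigcup_k A k).
Proof. exact: sigma_algebra_bigcup. Qed.
Lemma sgI (A : nat -> set T) : (forall k, <<s G >> (A k)) -> <<s G >> (\bigcap_k A k).
Proof.
move=> h; rewrite -(setCK (\bigcap_k A k)) setC_bigcap; apply: sgC.
by apply: sgU => k; apply: sgC.
Qed.
Lemma sg0 : <<s G >> set0.
Proof. exact: sigma_algebra0. Qed.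
End SG.

Section Sep.
Context {T : topologicalType} (hT : hausdorff_space T).

Definition sep (A B : set T) :=
  exists C, <<s open >> C /\ A `<=` C /\ C `&` B = set0.

Lemma sep_bigcup (A B : nat -> set T) : (forall k l, sep (A k) (B l)) ->
  sep (\bigcup_k A k) (\bigcup_l B l).
Proof.
move=> h.
have [Cf HC] := choice (fun kl : nat * nat => h kl.1 kl.2).
exists (\bigcup_k \bigcap_l Cf (k, l)); split.
  by apply: sgU => k; apply: sgI => l; have [] := HC (k, l).
split.
  move=> x [k _ Ax]; exists k => // l _; have [_ [+ _]] := HC (k, l); exact.
apply/seteqP; split => // x [[k _ Cx] [l _ Bx]].
have [_ [_ E]] := HC (k, l).
have : (Cf (k, l) `&` B l) x by split => //; exact: Cx.
by rewrite E.
Qed.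

Definition Ap (F : nat -> (nat -> nat) -> set T) n s :=
  [set x | exists t, (forall j, (j < n)%N -> t j = s j) /\ forall m, F m t x].

Definition upd (s : nat -> nat) n k := fun j => if j == n then k else s j.

Lemma Ap_split F n s : Ap F n s = \bigcup_k Ap F n.+1 (upd s n k).
Proof.
apply/seteqP; split => x.
- move=> [t [ts Ft]]; exists (t n) => //; exists t; split => // j jn.
  rewrite /upd; case: eqP => [->//|jn']. apply: ts; lia.
- move=> [k _ [t [ts Ft]]]; exists t; split => // j jn.
  rewrite ts; last lia; rewrite /upd; case: eqP => //; lia.
Qed.

Lemma Ap_sub F n s : prefix_inv F -> Ap F n s `<=` F n s.
Proof. by move=> pF x [t [ts /(_ n)]]; rewrite (pF n t s). Qed.

Lemma Ap_pref F n s s' : (forall j, (j < n)%N -> s j = s' j) -> Ap F n s = Ap F n s'.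
Proof.
move=> ss'; apply/seteqP; split => x [t [ts Ft]]; exists t; split => // j jn.
  by rewrite ts // ss'.
by rewrite ts // -ss'.
Qed.

Lemma Ap0 F s : Ap F 0 s = branch F.
Proof.
apply/seteqP; split => x; first by move=> [t [_ Ft]]; exists t.
by move=> [t Ft]; exists t.
Qed.

Lemma souslin_sep (A B : set T) : souslin A -> souslin B -> A `&` B = set0 ->
  sep A B.
Proof.
move=> [F [pF gF eA]] [G [pG gG eB]] AB.
apply/not_notP => nsep.
have step (nst : nat * (nat -> nat) * (nat -> nat)) : exists kl : nat * nat,
    ~ sep (Ap F nst.1.1 nst.1.2) (Ap G nst.1.1 nst.2) ->
    ~ sep (Ap F nst.1.1.+1 (upd nst.1.2 nst.1.1 kl.1))
          (Ap G nst.1.1.+1 (upd nst.2 nst.1.1 kl.2)).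
  case: nst => [[n s] t] /=.
  apply/not_notP => /forallNP H.
  have H' k l : sep (Ap F n.+1 (upd s n k)) (Ap G n.+1 (upd t n l)).
    by apply/not_notP => ns; apply: (H (k, l)) => _.
  apply: (H (0, 0)%N) => nn; exfalso; apply: nn.
  rewrite (Ap_split F n s) (Ap_split G n t); exact: sep_bigcup.
have [stp Hstp] := choice step.
pose fix st n : (nat -> nat) * (nat -> nat) :=
  if n is m.+1 then let kl := stp (m, (st m).1, (st m).2) in
    (upd (st m).1 m kl.1, upd (st m).2 m kl.2)
  else (fun=> 0%N, fun=> 0%N).
have nst n : ~ sep (Ap F n (st n).1) (Ap G n (st n).2).
  elim: n => [|n IH]; first by rewrite !Ap0 -eA -eB.
  exact: (Hstp (n, (st n).1, (st n).2)).
pose sg j := (st j.+1).1 j; pose tg j := (st j.+1).2 j.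
have stsg n j : (j < n)%N -> (st n).1 j = sg j /\ (st n).2 j = tg j.
  elim: n => [//|n IH] jn /=; rewrite /upd; case: eqP => [->|jn'].
    by rewrite /sg /tg /= /upd !eqxx.
  have := IH ltac:(lia); move=> [-> ->]; split => //.
have nsg n : ~ sep (Ap F n sg) (Ap G n tg).
  rewrite (@Ap_pref F n sg (st n).1); last by move=> j /(stsg n) [].
  rewrite (@Ap_pref G n tg (st n).2); last by move=> j /(stsg n) [].
  exact: nst.
have ne H n : ~ sep (Ap F n sg) H -> F n sg !=set0.
  move=> nH; apply/not_notP => F0; apply: nH; exists set0; split.
    exact: sg0.
  split; last by rewrite set0I.
  move=> x /(@Ap_sub F _ _ pF) Fx; apply: F0; by exists x.
have neG H n : ~ sep H (Ap G n tg) -> G n tg !=set0.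
  move=> nH; apply/not_notP => G0; apply: nH; exists setT; split.
    by have h := sigma_algebraCD (@sigma_algebra0 T setT open); rewrite setD0 in h.
  split => //; apply/seteqP; split => // x [_ /(@Ap_sub G _ _ pG) Gx].
  by apply: G0; exists x.
have [a [Fa ca]] := gF sg (fun n => ne _ n (nsg n)).
have [b [Gb cb]] := gG tg (fun n => neG _ n (nsg n)).
have Aa : A a by rewrite eA; exists sg.
have Bb : B b by rewrite eB; exists tg.
have ab : a != b.
  apply/eqP => eab; have : (A `&` B) a by split => //; rewrite eab.
  by rewrite AB.
move: hT; rewrite open_hausdorff => /(_ a b ab) [[U V] /= [aU bV] [oU oV UV]].
have [N1 H1] := ca U (open_nbhs_nbhs (conj oU (set_mem aU))).
have [N2 H2] := cb V (open_nbhs_nbhs (conj oV (set_mem bV))).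
apply: (nsg (maxn N1 N2)); exists U; split; first exact: sub_sigma_algebra.
split.
  move=> x /(@Ap_sub F _ _ pF) Fx; apply: (H1 (maxn N1 N2)) => //; exact: leq_maxl.
apply/seteqP; split => // x [Ux /(@Ap_sub G _ _ pG) Gx].
have Vx : V x by apply: (H2 (maxn N1 N2)) => //; exact: leq_maxr.
by move/eqP: UV => <-.
Qed.

End Sep.

Lemma natinv_small (R : realType) (eps : R) : 0 < eps ->
  exists N, forall n, (N <= n)%N -> n.+1%:R^-1 < eps.
Proof.
move=> e0; have [N _ HN] := near_infty_natSinv_lt (PosNum e0).
by exists N => n Nn; apply: HN.
Qed.

Section PK.
Context (R : realType) (P : completePseudoMetricType R) (d : nat -> P)
  (hd : forall x (eps : R), 0 < eps -> exists j, ball x eps (d j)).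

Let e n : R := n.+1%:R^-1.
Let e_gt0 n : 0 < e n. Proof. by rewrite invr_gt0 ltr0n. Qed.
Definition Kp n j := closed_ball (d j) (e n / 2).

Let Kp_ball n j : Kp n j `<=` ball (d j) (e n).
Proof. exact: subset_closure_half. Qed.

Let close2 n x y : Kp n x y -> forall z, Kp n x z -> ball y (e n + e n) z.
Proof.
move=> /Kp_ball/ball_sym h z /Kp_ball h'; exact: ball_triangle h h'.
Qed.

Lemma kp : kstruct Kp.
Proof.
split.
- move=> n x; have [|j hj] := @hd x (e n / 2); first by rewrite divr_gt0.
  by exists j; apply: subset_closure; exact: ball_sym.
- move=> b H; have [xs Hxs] := choice H.
  have hc : cauchy_ex (xs @ \oo).
    move=> eps eps0; have [|N HN] := @natinv_small _ (eps / 2); first by rewrite divr_gt0.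
    exists (xs N); exists N => // n /= Nn.
    have h1 := Hxs N N (leqnn N); have h2 := Hxs n N Nn.
    apply: (le_ball _ (close2 h1 h2)).
    have := HN N (leqnn N); rewrite -/(e N) => hN.
    by rewrite (splitr eps) lerD // ltW.
  have cv : cvg (xs @ \oo) by apply: cauchy_cvg; exact: cauchy_exP.
  exists (lim (xs @ \oo)) => n.
  have ev : \forall k \near \oo, Kp n (b n) (xs k).
    by exists n => // k /= nk; exact: Hxs.
  have cK : closed (Kp n (b n)) by exact: closed_closure.
  exact: (@closed_cvg _ _ _ _ xs (Kp n (b n)) cK ev _ cv).
- move=> b a Ha U /nbhs_ballP [eps eps0 HU].
  have [|N HN] := @natinv_small _ (eps / 2); first by rewrite divr_gt0.
  exists N => y Ky; apply: HU; apply: (le_ball _ (close2 (Ha N) Ky)).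
  have := HN N (leqnn N); rewrite -/(e N) => hN.
  by rewrite (splitr eps) lerD // ltW.
- by move=> n j; exact: closed_closure.
Qed.

End PK.

Lemma polish_kstruct (R : realType) (P : completePseudoMetricType R) :
  polish_space P -> exists K : nat -> nat -> set P, kstruct K.
Proof.
move=> [hP [D [cD dD]]].
have [[x0 _]|nP] := pselect (exists x : P, True); last first.
  exists (fun _ _ => set0); split.
  - by move=> n x; exfalso; apply: nP; exists x.
  - by move=> b /(_ 0%N) [x _]; exfalso; apply: nP; exists x.
  - by move=> b a _; exfalso; apply: nP; exists a.
  - by move=> n j; exact: closed0.
have [f finj] := countable_injP _ cD.
pose d n := if pselect (exists x, D x /\ f x = n) is left h then proj1_sig (cid h) else x0.
exists (Kp d); apply: kp => x eps eps0.
have [ox xo] := open_nbhs_ball x (PosNum eps0).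
have [y [/interior_subset bxy Dy]] := dD (ball x eps)° (ex_intro _ x xo) ox.
exists (f y); rewrite /d; case: pselect => [h|]; last by move=> /(_ (ex_intro _ y (conj Dy erefl))).
case: (cid h) => z [Dz fz] /=.
by rewrite (finj z y) // inE.
Qed.

Lemma hausdorff_prod (T U : topologicalType) :
  hausdorff_space T -> hausdorff_space U -> hausdorff_space (T * U)%type.
Proof.
move=> hT hU [p1 p2] [q1 q2] cl.
have e1 : p1 = q1.
  apply: hT => A B nA nB.
  have n1 : nbhs (p1, p2) (A `*` setT).
    by exists (A, setT) => //=; split => //; exact: filterT.
  have n2 : nbhs (q1, q2) (B `*` setT).
    by exists (B, setT) => //=; split => //; exact: filterT.
  have [[x y] [[/= Ax _] [/= Bx _]]] := cl _ _ n1 n2.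
  by exists x.
have e2 : p2 = q2.
  apply: hU => A B nA nB.
  have n1 : nbhs (p1, p2) (setT `*` A).
    by exists (setT, A) => //=; split => //; exact: filterT.
  have n2 : nbhs (q1, q2) (setT `*` B).
    by exists (setT, B) => //=; split => //; exact: filterT.
  have [[x y] [[/= _ Ay] [/= _ By]]] := cl _ _ n1 n2.
  by exists y.
by rewrite e1 e2.
Qed.

Lemma fst_cont (T U : topologicalType) : continuous (@fst T U).
Proof. by move=> p; exact: cvg_fst. Qed.

Lemma souslinI (T : topologicalType) (A B : set T) : hausdorff_space T ->
  souslin A -> souslin B -> souslin (A `&` B).
Proof.
move=> hT sA sB.
have -> : A `&` B = \bigcap_k (if k is 0%N then A else B).
  apply/seteqP; split => x.
  - by move=> [Ax Bx] [|k] _.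
  - by move=> H; split; [exact: (H 0%N)|exact: (H 1%N)].
by apply: souslin_bigcap => // -[|k].
Qed.

Lemma souslinU (T : topologicalType) (A B : set T) :
  souslin A -> souslin B -> souslin (A `|` B).
Proof.
move=> sA sB.
have -> : A `|` B = \bigcup_k (if k is 0%N then A else B).
  apply/seteqP; split => x.
  - by move=> [Ax|Bx]; [exists 0%N|exists 1%N].
  - by move=> [[|k] _ H]; [left|right].
by apply: souslin_bigcup => -[|k].
Qed.

Section Borel.
Context (T : topologicalType) (hT : hausdorff_space T) (K : nat -> nat -> set T)
  (hK : kstruct K).

Lemma borel_souslin (B : set T) : <<s open >> B -> souslin B /\ souslin (~` B).
Proof.
move: B; apply: smallest_sub.
- split.
  + split; first exact: souslin0.
    by rewrite setC0; apply: (souslin_closed hK); exact: closedT.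
  + by move=> A [sA sAc]; rewrite setTD setCK.
  + move=> A hA; split.
      by apply: souslin_bigcup => n; have [] := hA n.
    by rewrite setC_bigcup; apply: souslin_bigcap => // n; have [] := hA n.
- move=> U oU; split; first exact: (souslin_open hK).
  by apply: (souslin_closed hK); rewrite closedC.
Qed.

End Borel.

Definition adata d (X : measurableType d) (P : topologicalType) (e : X -> P) :=
  [/\ hausdorff_space P, (exists K : nat -> nat -> set P, kstruct K),
      injective e, souslin (range e) &
      forall A, measurable A <-> exists B, <<s open >> B /\ A = e @^-1` B].

Lemma analytic_data d (X : measurableType d) : analytic_borel_space X ->
  exists (R : realType) (P : completePseudoMetricType R) (e : X -> P), adata e.
Proof.
move=> [R [P [e [pP einj an hm]]]].
exists R, P, e; split => //.
- by case: pP.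
- exact: polish_kstruct.
- case: an => [->|[Q [f [pQ [cf rf]]]]]; first exact: souslin0.
  rewrite -rf; apply: souslin_image => //; first by case: pP.
  have [K hK] := polish_kstruct pQ.
  by apply: (souslin_closed hK); exact: closedT.
Qed.

Section AD.
Context d (X : measurableType d) (P : topologicalType) (e : X -> P) (hd : adata e).

Lemma image_pre (B : set P) : e @` (e @^-1` B) = B `&` range e.
Proof.
apply/seteqP; split => y.
- by move=> [x Bx <-]; split => //; exists x.
- by move=> [By [x _ ex]]; exists x => //; rewrite /preimage/= ex.
Qed.

Lemma meas_souslin (A : set X) : measurable A ->
  souslin (e @` A) /\ souslin (e @` ~` A).
Proof.
case: hd => hP [K hK] einj sr hm.
move=> /hm [B [bB ->]]; have [s1 s2] := borel_souslin hP hK bB.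
have -> : ~` (e @^-1` B) = e @^-1` (~` B) by [].
by rewrite !image_pre; split; exact: souslinI.
Qed.

End AD.

Lemma image_bigcap_inj (T U : Type) (f : T -> U) (F : nat -> set T) :
  injective f -> f @` (\bigcap_k F k) = \bigcap_k (f @` F k).
Proof.
move=> finj; apply/seteqP; split => y.
- by move=> [x Fx <-] k _; exists x => //; exact: Fx.
- move=> H; have [x0 _ e0] := H 0%N I; exists x0 => // k _.
  have [x Fx fx] := H k I; by rewrite -(finj _ _ (etrans fx (esym e0))).
Qed.

Section Prod.
Context d1 d2 (X : measurableType d1) (Y : measurableType d2)
  (P1 P2 : topologicalType) (e1 : X -> P1) (e2 : Y -> P2)
  (h1 : adata e1) (h2 : adata e2).

Let E (p : X * Y) : P1 * P2 := (e1 p.1, e2 p.2).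

Let Einj : injective E.
Proof.
case: h1 => _ _ i1 _ _; case: h2 => _ _ i2 _ _.
move=> [a b] [a' b'] [/i1 -> /i2 ->] //.
Qed.

Lemma prod_meas_souslin (W : set (X * Y)) : measurable W ->
  souslin (E @` W) /\ souslin (E @` ~` W).
Proof.
have hP : hausdorff_space (P1 * P2)%type.
  by case: h1 => ? _ _ _ _; case: h2 => ? _ _ _ _; exact: hausdorff_prod.
have imX A B : E @` (A `*` B) = e1 @` A `*` e2 @` B.
  apply/seteqP; split.
  - by move=> _ [[a b] [/= Aa Bb] <-]; split; [exists a|exists b].
  - by move=> [y1 y2] [/= [a Aa ea] [b Bb eb]]; exists (a, b) => //; rewrite /E /= ea eb.
rewrite measurable_prod_measurableType.
move: W; apply: smallest_sub.
- split.
  + rewrite image_set0 setC0; split; first exact: souslin0.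
    rewrite -setXTT imX; apply: souslin_setX.
    * by case: h1.
    * by case: h2.
  + by move=> A [sA sAc]; rewrite setTD setCK.
  + move=> F hF; split.
      by rewrite image_bigcup; apply: souslin_bigcup => n; have [] := hF n.
    rewrite setC_bigcup image_bigcap_inj //.
    by apply: souslin_bigcap => // n; have [] := hF n.
- move=> _ [A mA [B mB <-]].
  have [sA sAc] := meas_souslin h1 mA; have [sB sBc] := meas_souslin h2 mB.
  split; first by rewrite imX; exact: souslin_setX.
  have -> : ~` (A `*` B) = (~` A `*` setT) `|` (setT `*` ~` B).
    apply/seteqP; split => -[a b] /=.
    - move=> H; have [Aa|nAa] := pselect (A a).
        by right; split => // Bb; apply: H; split.
      by left; split.
    - by move=> [[/= nA _] [/= Aa Bb]|[/= _ nB] [/= Aa Bb]].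
  rewrite image_setU !imX; apply: souslinU; apply: souslin_setX => //.
  + by case: h2.
  + by case: h1.
Qed.

End Prod.

Lemma graph_meas d1 d2 (X : measurableType d1) (Y : measurableType d2)
  (phi : X -> Y) : analytic_borel_space X -> analytic_borel_space Y ->
  measurable [set p : X * Y | p.2 = phi p.1] -> measurable_fun setT phi.
Proof.
move=> aX aY mG.
have [R1 [P1 [e1 h1]]] := analytic_data aX.
have [R2 [P2 [e2 h2]]] := analytic_data aY.
have h1' := h1; case: h1' => hP1 _ i1 _ hm1.
move=> _ B mB; rewrite setTI.
pose E (p : X * Y) : P1 * P2 := (e1 p.1, e2 p.2).
have key (B' : set Y) : measurable B' ->
    souslin (e1 @` (phi @^-1` B')).
  move=> mB'.
  have mW : measurable ([set p : X * Y | p.2 = phi p.1] `&` (setT `*` B')).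
    by apply: measurableI => //; exact: measurableX.
  have [s1 _] := prod_meas_souslin h1 h2 mW.
  have := souslin_image (@fst_cont P1 P2) hP1 s1.
  suff -> : fst @` ((fun p => (e1 p.1, e2 p.2)) @` ([set p : X * Y | p.2 = phi p.1] `&` (setT `*` B')))
     = e1 @` (phi @^-1` B') by [].
  apply/seteqP; split => z.
  - by move=> [_ [[x y] [/= -> [_ /= Bx]] <-] <-]; exists x.
  - by move=> [x Bx <-]; exists (e1 x, e2 (phi x)) => //; exists (x, phi x).
have sB := key B mB.
have sBc := key (~` B) (measurableC mB).
have [|C [bC [sub dis]]] := souslin_sep hP1 sB sBc.
  apply/seteqP; split => // z [[x Bx <-] [x' nBx' ex]].
  by apply: nBx'; rewrite /preimage/= (i1 _ _ ex).
have -> : phi @^-1` B = e1 @^-1` C.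
  apply/seteqP; split => x.
  - by move=> Bx; apply: sub; exists x.
  - move=> Cx; apply/not_notP => nBx.
    have : (C `&` (e1 @` (phi @^-1` (~` B)))) (e1 x) by split => //; exists x.
    by rewrite dis.
by apply/hm1; exists C.
Qed.

Lemma kbranch_eq (T : topologicalType) (K : nat -> nat -> set T) (a b : T) :
  hausdorff_space T -> kstruct K ->
  (forall n, exists j, K n j a /\ K n j b) -> a = b.
Proof.
move=> hT hK H; have [bj Hb] := choice H.
apply: hT => A B nA nB.
have [N HN] := @k2 _ _ hK bj b (fun n => (Hb n).2) B nB.
exists a; split; first exact: nbhs_singleton.
exact: HN (Hb N).1.
Qed.

Lemma closed_borel (P : topologicalType) (C : set P) : closed C -> <<s open >> C.
Proof.
move=> cC; rewrite -(setCK C); apply: sgC; apply: sub_sigma_algebra.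
exact: closed_openC.
Qed.

Lemma eq_meas d (X : measurableType d) d' (Z : measurableType d')
  (D : set Z) (u v : Z -> X) : analytic_borel_space X ->
  measurable D -> measurable_fun D u -> measurable_fun D v ->
  measurable (D `&` [set z | u z = v z]).
Proof.
move=> aX mD mu mv.
have [R [P [e [hP [K hK] einj _ hm]]]] := analytic_data aX.
have mK n j : measurable (e @^-1` K n j).
  by apply/hm; exists (K n j); split => //; apply: closed_borel; exact: (k3 hK).
have -> : D `&` [set z | u z = v z] = \bigcap_n \bigcup_j
    ((D `&` u @^-1` (e @^-1` K n j)) `&` (D `&` v @^-1` (e @^-1` K n j))).
  apply/seteqP; split => z.
  - move=> [Dz uv] n _; have [j Kj] := k0 hK n (e (u z)).
    by exists j => //; split; split => //; rewrite /preimage /= -uv.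
  - move=> H; have [j _ [[Dz _] _]] := H 0%N I; split => //.
    apply: einj; apply: (kbranch_eq hP hK) => n.
    by have [j' _ [[_ h1] [_ h2]]] := H n I; exists j'.
apply: bigcapT_measurable => n; apply: bigcupT_measurable => j.
apply: measurableI; [exact: mu|exact: mv].
Qed.

Theorem lemma3p4 (R : realType)
  (d : measure_display) (G : measurableType d)
  (r s : G -> G) (mul : G -> G -> G) (inv : G -> G)
  (dX : measure_display) (X : measurableType dX)
  (sX : X -> G) (act : X -> G -> X) :
  analytic_borel_space G -> analytic_borel_space X ->
  is_borel_groupoid r s mul inv ->
  is_right_borel_action r s mul sX act ->
  free_action r sX act ->
  (exists c, borel_cross_section r sX act c) ->
  proper_borel_G_space r mul sX act R.
Proof.
move=> aG aX [[H1 H2 H3 H4 H5] [mr [ms [minv [_ [_ _]]]]]].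
move=> [hunit [hs [hid [hassoc [msX [mdom mact]]]]]] hfree [c [hc1 hc2]].
have uniq z g g' : sX z = r g -> sX z = r g' -> act z g = act z g' -> g = g'.
  move=> zg zg' e.
  have sgg' : s g = s g' by rewrite -(hs z g zg) -(hs z g' zg') e.
  have rig : s g = r (inv g) by rewrite (H5 g).1.
  have A1 : act (act z g) (inv g) = z.
    rewrite (hassoc z g (inv g) zg rig) (proj1 (proj2 (proj2 (H5 g)))) -zg.
    exact: hid.
  have A2 : act (act z g') (inv g) = act z (mul g' (inv g)).
    by apply: hassoc => //; rewrite -sgg'.
  have u1 : act z (mul g' (inv g)) = z by rewrite -A2 -e A1.
  have hr : sX z = r (mul g' (inv g)).
    by rewrite (proj1 (H2 g' (inv g) _)) // -sgg'.
  have uE : r (mul g' (inv g)) = mul g' (inv g) := hfree z _ hr u1.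
  rewrite (proj1 (H2 g' (inv g) _)) in uE; last by rewrite -sgg'.
  rewrite -(proj2 (H4 g')) -sgg' -(proj2 (proj2 (proj2 (H5 g)))).
  rewrite -(H3 g' (inv g) g); last first.
    by rewrite (proj1 (proj2 (H5 g))).
    by rewrite -sgg'.
  by rewrite -uE -zg' zg (proj1 (H4 g)).
have invmul a g : s a = r g -> mul g (inv (mul a g)) = inv a.
  move=> ag; set k := mul a g.
  have [hrk hsk] := H2 a g ag.
  have gik : s g = r (inv k) by rewrite (H5 k).1 hsk.
  set t := mul g (inv k).
  have [hrt hst] := H2 g (inv k) gik.
  have st1 : mul a t = r a.
    by rewrite /t -(H3 a g (inv k) ag gik) -/k (proj1 (proj2 (proj2 (H5 k)))).
  rewrite -(proj2 (H4 (inv a))) (proj1 (proj2 (H5 a))) -st1.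
  rewrite -(H3 (inv a) a t); last by rewrite hrt -ag.
    by rewrite (proj2 (proj2 (proj2 (H5 a)))) ag -hrt (proj1 (H4 t)).
  by rewrite (proj1 (proj2 (H5 a))).

pose q := qmap r sX act.
pose y x := c (q x).
have orbit_act x g : sX x = r g -> orbit r sX act (act x g) = orbit r sX act x.
  move=> xg; apply/seteqP; split => z.
  - move=> [k [hk ->]]; exists (mul g k); split.
      by rewrite (proj1 (H2 g k _)) // -(hs x g xg).
    by apply: hassoc => //; rewrite -(hs x g xg).
  - move=> [k [hk ->]].
    have gi : s g = r (inv g) by rewrite (H5 g).1.
    have ik : s (inv g) = r k by rewrite (proj1 (proj2 (H5 g))) -xg.
    exists (mul (inv g) k); split.
      by rewrite (hs x g xg) (proj1 (H2 _ _ ik)) (H5 g).1.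
    rewrite (hassoc x g (mul (inv g) k) xg); last by rewrite (proj1 (H2 _ _ ik)).
    rewrite -(H3 g (inv g) k gi ik) (proj1 (proj2 (proj2 (H5 g)))) -xg hk.
    by rewrite (proj1 (H4 k)).
have q_act x g : sX x = r g -> q (act x g) = q x.
  by move=> xg; apply: eq_exist; exact: orbit_act.
have ex x : exists g, sX (y x) = r g /\ act (y x) g = x.
  have : q (y x) = q x by exact: hc1.
  move=> /(congr1 (@proj1_sig _ _)) /= oE.
  have : orbit r sX act x x.
    by exists (sX x); split; [rewrite hunit|rewrite hid].
  by rewrite -oE => -[g [h1 h2]]; exists g; split.
have [phi Hphi] := choice ex.
have my : measurable_fun setT y.
  by move=> _ B mB; rewrite setTI; exact: hc2.
have mphi : measurable_fun setT phi.
  apply: graph_meas => //.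
  have mE1 : measurable (setT `&` [set p : X * G | (sX \o y \o fst) p = (r \o snd) p]).
    apply: eq_meas => //.
    - by apply: measurableT_comp => //; apply: measurableT_comp => //; exact: measurable_fst.
    - by apply: measurableT_comp => //; exact: measurable_snd.
  set E1 := (setT `&` _) in mE1.
  have mu : measurable_fun E1 ((fun p : X * G => act p.1 p.2) \o (fun p => (y p.1, p.2))).
    apply: (measurable_comp mdom) => //.
      by move=> _ [p [_ /= Ep] <-].
    apply: (measurable_funS measurableT) => //.
    apply: measurable_fun_pair; last exact: measurable_snd.
    by apply: measurableT_comp => //; exact: measurable_fst.
  have := eq_meas aX mE1 mu (measurable_funS measurableT (@subsetT _ E1) (@measurable_fst _ _ X G)).
  congr measurable; apply/seteqP; split => -[x g] /=.
  - move=> [[_ /= h1] h2]; have [h1' h2'] := Hphi x.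
    by apply: (uniq (y x)) => //; rewrite h2 h2'.
  - move=> ->; have [h1 h2] := Hphi x; split; last exact: h2.
    by rewrite /E1; split.
pose h x := inv (phi x).
have mh : measurable_fun setT h by exact: measurableT_comp.
have rf x : range_fibre r sX x (x, h x).
  split => //=; have [h1 h2] := Hphi x.
  by rewrite /h (H5 (phi x)).1 -(hs _ _ h1) h2.
have phi_act x g : sX x = r g -> phi (act x g) = mul (phi x) g.
  move=> xg; have [h1 h2] := Hphi x; have [k1 k2] := Hphi (act x g).
  have yE : y (act x g) = y x by rewrite /y q_act.
  have sg : s (phi x) = r g by rewrite -(hs _ _ h1) h2.
  apply: (uniq (y x)).
  - by rewrite -yE.
  - by rewrite (proj1 (H2 _ _ sg)).
  - by rewrite -(hassoc _ _ _ h1 sg) h2 -{1}yE k2.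
exists (fun x => \d_(x, h x)); split.
- by move=> x; rewrite /= /dirac indicE mem_set.
- move=> f f0 mf.
  have -> : (fun x => (\int[\d_(x, h x)]_p f p)%E) = f \o (fun x => (x, h x)).
    apply/funext => x; rewrite integral_dirac // diracT mul1e //.
  apply: measurableT_comp => //; apply: measurable_fun_pair => //.
- move=> x g xg A mA; rewrite /= /dirac !indicE.
  have sg : s (phi x) = r g by have [h1 h2] := Hphi x; rewrite -(hs _ _ h1) h2.
  have hE : mul g (h (act x g)) = h x by rewrite /h phi_act // invmul.
  congr ((_ : bool)%:R%:E); apply/idP/idP.
  + by move=> /set_mem [_ /=]; rewrite hE => ?; apply/mem_set.
  + by move=> /set_mem Ax; apply/mem_set; split; [exact: rf|rewrite /= hE].
Qed.
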